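(* Let $n\ge1$, let $q_1,\dots,q_n$ be positive integers and $c_1,\dots,c_n>0$. For $y_0\in\mathbb{R}$ let $\Gamma_n(x)=y_0-\sum_{j=1}^n c_j\sin(2\pi q_jx)$ and let $\mu_n$ be the probability measure on $\mathbb{T}^2$ obtained as the push-forward of Lebesgue measure on $[0,1]$ under $x\mapsto (x,\Gamma_n(x)) \bmod \mathbb{Z}^2$ (i.e. $\int f\,d\mu_n=\int_0^1 f(x,\Gamma_n(x))\,dx$). Then for every trigonometric polynomial $f$ on $\mathbb{T}^2$ and every $\varepsilon>0$ there exist numbers $\tilde c_n=\tilde c_n(\varepsilon,f)$ and $\tilde q_n=\tilde q_n(\varepsilon,f,c_1,\dots,c_n,q_1,\dots,q_{n-1})$, independent of $y_0$, such that if $c_n>\tilde c_n$ and $q_n>\tilde q_n$ then $$\left|\int_{\mathbb{T}^2}f\,d\mu_n-\int_{\mathbb{T}^2}f(z)\,dz\right|<\varepsilon .$$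
   Context: $\mathbb{T}^2=\mathbb{R}^2/\mathbb{Z}^2$ with Lebesgue measure $dz$. (In the paper, when $q_j=4s_jq_{j-1}$ for natural $s_j$, the graph of $\Gamma_n$ is an invariant curve of $G_n(\alpha)(x,y)=(x+\alpha,\,y+g_n(x)-g_n(x+\alpha))$, $g_n=\sum_{j\le n}c_j\sin 2\pi q_jx$, and $\mu_n$ is its invariant probability measure on that curve for irrational $\alpha$.) *)

(* Defs.v *)
From Stdlib Require Import Reals ZArith List.
From Coquelicot Require Import Coquelicot.
Open Scope R_scope.

Definition cexpi (t : R) : C := (cos t, sin t).

(* A trigonometric polynomial on T^2 = R^2/Z^2, given by its finitely many
   coefficients: f(x,y) = sum_{(k,l,a) in P} a * exp(2 pi i (k x + l y)). *)
Definition trig_poly2 := list (Z * Z * C).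

Definition tp_eval (P : trig_poly2) (x y : R) : C :=
  fold_right (fun t acc =>
     let '(k, l, a) := t in
     Cplus (Cmult a (cexpi (2 * PI * (IZR k * x + IZR l * y)))) acc)
   (RtoC 0) P.

Fixpoint sum1n (u : nat -> R) (n : nat) : R :=
  match n with
  | O => 0
  | S m => sum1n u m + u (S m)
  end.

Definition Gamma (n : nat) (c : nat -> R) (q : nat -> nat) (y0 x : R) : R :=
  y0 - sum1n (fun j => c j * sin (2 * PI * INR (q j) * x)) n.

Definition int_mu (n : nat) (c : nat -> R) (q : nat -> nat) (y0 : R)
  (P : trig_poly2) : C :=
  @RInt C_R_CompleteNormedModule (fun x => tp_eval P x (Gamma n c q y0 x)) 0 1.

(* int_{T^2} f(z) dz, with T^2 identified with the fundamental domain [0,1]^2 *)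
Definition int_T2 (P : trig_poly2) : C :=
  @RInt C_R_CompleteNormedModule (fun x => @RInt C_R_CompleteNormedModule (fun y => tp_eval P x y) 0 1) 0 1.

(* Main.v *)
Require Import Defs.
From Stdlib Require Import Reals ZArith List Lra Lia.
From Coquelicot Require Import Coquelicot.
Open Scope R_scope.


Lemma is_derive_eq (f : R -> R) x l l' : is_derive f x l -> l = l' -> is_derive f x l'.
Proof. intros H ->; exact H. Qed.

Lemma cont_of_der (f : R -> R) x l : is_derive f x l -> continuous f x.
Proof. intros H. apply (ex_derive_continuous (V:=R_NormedModule) f). exists l; exact H. Qed.

Lemma cont_mult (f g : R -> R) x : continuous f x -> continuous g x -> continuous (fun t => f t * g t) x.
Proof. intros; apply (continuous_mult f g); auto. Qed.
Lemma cont_plus (f g : R -> R) x : continuous f x -> continuous g x -> continuous (fun t => f t + g t) x.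
Proof. intros; apply (continuous_plus f g); auto. Qed.
Lemma cont_opp (f : R -> R) x : continuous f x -> continuous (fun t => - f t) x.
Proof. intros; apply (continuous_opp f); auto. Qed.
Lemma cont_minus (f g : R -> R) x : continuous f x -> continuous g x -> continuous (fun t => f t - g t) x.
Proof. intros; apply cont_plus; auto; apply cont_opp; auto. Qed.
Lemma cont_cos (f : R -> R) x : continuous f x -> continuous (fun t => cos (f t)) x.
Proof. intros; apply (continuous_comp f cos); auto; apply continuous_cos. Qed.
Lemma cont_sin (f : R -> R) x : continuous f x -> continuous (fun t => sin (f t)) x.
Proof. intros; apply (continuous_comp f sin); auto; apply continuous_sin. Qed.
Lemma cont_const (c x : R) : continuous (fun _ : R => c) x.
Proof. apply continuous_const. Qed.
Lemma cont_id (x : R) : continuous (fun t : R => t) x.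
Proof. apply continuous_id. Qed.

Lemma exR (g : R -> R) a b : (forall z, Rmin a b <= z <= Rmax a b -> continuous g z) -> ex_RInt g a b.
Proof. intros H; apply (ex_RInt_continuous (V:=R_CompleteNormedModule) g); auto. Qed.

Lemma vdc (f f1 f2 : R -> R) a b m M :
  a <= b -> 0 < m ->
  (forall t, a <= t <= b -> is_derive f t (f1 t)) ->
  (forall t, a <= t <= b -> is_derive f1 t (f2 t)) ->
  (forall t, a <= t <= b -> continuous f2 t) ->
  (forall t, a <= t <= b -> m <= Rabs (f1 t)) ->
  (forall t, a <= t <= b -> Rabs (f2 t) <= M) ->
  Rabs (RInt (fun t => cos (f t)) a b) <= 2/m + (b-a)*(M/(m*m)) /\
  Rabs (RInt (fun t => sin (f t)) a b) <= 2/m + (b-a)*(M/(m*m)).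
Proof.
  intros Hab Hm Hd1 Hd2 Hc2 Hlo Hhi.
  assert (Hnz : forall t, a <= t <= b -> f1 t <> 0).
  { intros t Ht Hz. specialize (Hlo t Ht). rewrite Hz, Rabs_R0 in Hlo. lra. }
  assert (Hcf : forall t, a <= t <= b -> continuous f t) by (intros; eapply cont_of_der; eauto).
  assert (Hcf1 : forall t, a <= t <= b -> continuous f1 t) by (intros; eapply cont_of_der; eauto).
  assert (HMpos : 0 <= M) by (specialize (Hhi a (conj (Rle_refl a) Hab)); pose proof (Rabs_pos (f2 a)); lra).
  assert (Hinv : forall t, a <= t <= b -> Rabs (/ f1 t) <= / m).
  { intros t Ht. rewrite Rabs_inv. apply Rinv_le_contravar; auto. }
  assert (Hg : forall t, a <= t <= b -> Rabs (f2 t / (f1 t)^2) <= M/(m*m)).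
  { intros t Ht. unfold Rdiv. rewrite Rabs_mult, Rabs_inv. simpl. rewrite Rmult_1_r, Rabs_mult.
    apply Rmult_le_compat; auto using Rabs_pos.
    - left; apply Rinv_0_lt_compat. apply Rmult_lt_0_compat; apply Rabs_pos_lt; auto.
    - apply Rinv_le_contravar. nra. specialize (Hlo t Ht). pose proof (Rabs_pos (f1 t)). nra. }
  assert (Hrange : forall z, Rmin a b <= z <= Rmax a b -> a <= z <= b).
  { intros z Hz. rewrite Rmin_left in Hz; auto. rewrite Rmax_right in Hz; auto. }
  assert (Hrange' : forall z, a <= z <= b -> Rmin a b <= z <= Rmax a b).
  { intros z Hz. rewrite Rmin_left; auto. rewrite Rmax_right; auto. }
  split.
  - set (F t := sin (f t) * / f1 t).
    set (g t := sin (f t) * (f2 t / (f1 t)^2)).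
    assert (HdF : forall t, a <= t <= b -> is_derive F t (cos (f t) - g t)).
    { intros t Ht. unfold F, g.
      eapply is_derive_eq.
      - apply (is_derive_mult (fun t => sin (f t)) (fun t => / f1 t)).
        + apply (is_derive_comp sin f). apply is_derive_sin. apply Hd1; auto.
        + apply is_derive_inv. apply Hd2; auto. apply Hnz; auto.
        + intros; apply Rmult_comm.
      - simpl. unfold plus, mult, scal; simpl. unfold mult; simpl. field. apply Hnz; auto. }
    assert (Hcg : forall t, a <= t <= b -> continuous g t).
    { intros t Ht. unfold g. apply cont_mult. apply cont_sin; auto.
      unfold Rdiv. apply cont_mult; auto. apply continuous_Rinv_comp.
      simpl. apply cont_mult; auto. apply cont_mult; auto. apply cont_const.
      simpl. rewrite Rmult_1_r. apply Rmult_integral_contrapositive; split; apply Hnz; auto. }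
    assert (HI : is_RInt (fun t => cos (f t) - g t) a b (F b - F a)).
    { apply (is_RInt_derive F (fun t => cos (f t) - g t)).
      intros; apply HdF; auto. intros x Hx. apply cont_minus; auto. apply cont_cos; auto. }
    assert (Hexg : ex_RInt g a b) by (apply exR; auto).
    assert (E : RInt (fun t => cos (f t)) a b = (F b - F a) + RInt g a b).
    { rewrite <- (is_RInt_unique _ _ _ _ HI).
      assert (Hexd : ex_RInt (fun t => cos (f t) - g t) a b) by (eexists; eauto).
      pose proof (RInt_plus (fun t => cos (f t) - g t) g a b Hexd Hexg) as Hp.
      unfold plus in Hp; simpl in Hp. rewrite <- Hp.
      apply RInt_ext. intros x _. unfold plus; simpl. ring. }
    rewrite E.
    assert (HF : forall t, a <= t <= b -> Rabs (F t) <= / m).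
    { intros t Ht. unfold F. rewrite Rabs_mult. pose proof (Rabs_pos (/ f1 t)).
      pose proof (Hinv t Ht). assert (Rabs (sin (f t)) <= 1) by (apply Rabs_le; apply SIN_bound). nra. }
    pose proof (abs_RInt_le_const g a b (M/(m*m)) Hab Hexg (fun t Ht => ltac:(unfold g; rewrite Rabs_mult;
      pose proof (Hg t Ht); pose proof (Rabs_pos (f2 t / (f1 t)^2));
      assert (Rabs (sin (f t)) <= 1) by (apply Rabs_le; apply SIN_bound); nra))).
    pose proof (HF a (conj (Rle_refl a) Hab)). pose proof (HF b (conj Hab (Rle_refl b))).
    pose proof (Rabs_triang (F b - F a) (RInt g a b)). pose proof (Rabs_triang (F b) (- F a)).
    rewrite Rabs_Ropp in H3. unfold Rminus in *. unfold Rdiv. lra.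
  - set (F t := - cos (f t) * / f1 t).
    set (g t := cos (f t) * (f2 t / (f1 t)^2)).
    assert (HdF : forall t, a <= t <= b -> is_derive F t (sin (f t) + g t)).
    { intros t Ht. unfold F, g.
      eapply is_derive_eq.
      - apply (is_derive_mult (fun t => - cos (f t)) (fun t => / f1 t)).
        + apply (is_derive_opp (fun t => cos (f t))). apply (is_derive_comp cos f). apply is_derive_cos. apply Hd1; auto.
        + apply is_derive_inv. apply Hd2; auto. apply Hnz; auto.
        + intros; apply Rmult_comm.
      - simpl. unfold plus, mult, scal, opp; simpl. unfold mult; simpl. field. apply Hnz; auto. }
    assert (Hcg : forall t, a <= t <= b -> continuous g t).
    { intros t Ht. unfold g. apply cont_mult. apply cont_cos; auto.
      unfold Rdiv. apply cont_mult; auto. apply continuous_Rinv_comp.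
      simpl. apply cont_mult; auto. apply cont_mult; auto. apply cont_const.
      simpl. rewrite Rmult_1_r. apply Rmult_integral_contrapositive; split; apply Hnz; auto. }
    assert (HI : is_RInt (fun t => sin (f t) + g t) a b (F b - F a)).
    { apply (is_RInt_derive F (fun t => sin (f t) + g t)).
      intros; apply HdF; auto. intros x Hx. apply cont_plus; auto. apply cont_sin; auto. }
    assert (Hexg : ex_RInt g a b) by (apply exR; auto).
    assert (E : RInt (fun t => sin (f t)) a b = (F b - F a) - RInt g a b).
    { rewrite <- (is_RInt_unique _ _ _ _ HI).
      assert (Hexd : ex_RInt (fun t => sin (f t) + g t) a b) by (eexists; eauto).
      pose proof (RInt_minus (fun t => sin (f t) + g t) g a b Hexd Hexg) as Hp.
      unfold minus, plus, opp in Hp; simpl in Hp. replace (RInt (fun t => sin (f t) + g t) a b - RInt g a b) with (RInt (fun t => sin (f t) + g t) a b + - RInt g a b) by ring. rewrite <- Hp.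
      apply RInt_ext. intros x _. unfold minus, plus, opp; simpl. ring. }
    rewrite E.
    assert (HF : forall t, a <= t <= b -> Rabs (F t) <= / m).
    { intros t Ht. unfold F. rewrite Rabs_mult, Rabs_Ropp. pose proof (Rabs_pos (/ f1 t)).
      pose proof (Hinv t Ht). assert (Rabs (cos (f t)) <= 1) by (apply Rabs_le; apply COS_bound). nra. }
    pose proof (abs_RInt_le_const g a b (M/(m*m)) Hab Hexg (fun t Ht => ltac:(unfold g; rewrite Rabs_mult;
      pose proof (Hg t Ht); pose proof (Rabs_pos (f2 t / (f1 t)^2));
      assert (Rabs (cos (f t)) <= 1) by (apply Rabs_le; apply COS_bound); nra))).
    pose proof (HF a (conj (Rle_refl a) Hab)). pose proof (HF b (conj Hab (Rle_refl b))).
    pose proof (Rabs_triang (F b - F a) (- RInt g a b)). pose proof (Rabs_triang (F b) (- F a)).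
    rewrite Rabs_Ropp in H2, H3. unfold Rminus in *. unfold Rdiv. lra.
Qed.


Lemma chasles (h : R -> R) a b c : (forall x, continuous h x) ->
  RInt h a c = RInt h a b + RInt h b c.
Proof.
  intros Hc. symmetry.
  apply (RInt_Chasles (V:=R_CompleteNormedModule) h a b c); apply exR; auto.
Qed.

Lemma shift1 (h : R -> R) a : (forall x, continuous h x) -> (forall t, h (t+1) = h t) ->
  RInt h a (a+1) = RInt h 0 1.
Proof.
  intros Hc Hp.
  rewrite (chasles h a 1 (a+1)) by auto.
  rewrite (chasles h 0 a 1) by auto.
  assert (E : RInt h 1 (a+1) = RInt h 0 a).
  { pose proof (RInt_comp_lin (V:=R_CompleteNormedModule) h 1 1 0 a) as E.
    rewrite !Rmult_1_l, Rplus_0_l, (Rplus_comm a 1) in E.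
    rewrite (Rplus_comm a 1), <- E by (apply exR; auto).
    apply RInt_ext. intros x _. unfold scal; simpl. unfold mult; simpl.
    rewrite Rmult_1_l, Rmult_1_l. apply Hp. }
  rewrite E. apply Rplus_comm.
Qed.

Lemma abs_RInt_small (h : R -> R) a b : a <= b -> (forall x, continuous h x) ->
  (forall t, Rabs (h t) <= 1) -> Rabs (RInt h a b) <= b - a.
Proof.
  intros Hab Hc Hb. rewrite <- (Rmult_1_r (b-a)).
  apply abs_RInt_le_const; auto. apply exR; auto.
Qed.

Lemma cos_lower d u : 0 < d -> d < PI/2 -> Rabs u <= PI/2 - d -> cos (PI/2 - d) <= cos u.
Proof.
  intros Hd1 Hd2 Hu. pose proof PI_RGT_0.
  destruct (Rle_dec 0 u).
  - rewrite Rabs_right in Hu by lra. apply cos_decr_1; lra.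
  - rewrite Rabs_left in Hu by lra. rewrite <- (cos_neg u). apply cos_decr_1; lra.
Qed.

Lemma step2_gen (g : R -> R) d B :
  0 < d -> d < 1/8 ->
  (forall x, continuous g x) -> (forall t, g (t+1) = g t) -> (forall t, Rabs (g t) <= 1) ->
  Rabs (RInt g (-1/4 + d) (1/4 - d)) <= B ->
  Rabs (RInt g (1/4 + d) (3/4 - d)) <= B ->
  Rabs (RInt g 0 1) <= 4*d + 2*B.
Proof.
  intros Hd Hd' Hc Hp Hb H1 H2.
  rewrite <- (shift1 g (-1/4)) by auto.
  replace (-1/4 + 1) with (3/4) by field.
  rewrite (chasles g (-1/4) (-1/4+d)) by auto.
  rewrite (chasles g (-1/4+d) (1/4-d)) by auto.
  rewrite (chasles g (1/4-d) (1/4+d)) by auto.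
  rewrite (chasles g (1/4+d) (3/4-d)) by auto.
  pose proof (abs_RInt_small g (-1/4) (-1/4+d) ltac:(lra) Hc Hb).
  pose proof (abs_RInt_small g (1/4-d) (1/4+d) ltac:(lra) Hc Hb).
  pose proof (abs_RInt_small g (3/4-d) (3/4) ltac:(lra) Hc Hb).
  set (a1 := RInt g (-1/4) (-1/4+d)) in *.
  set (a2 := RInt g (-1/4+d) (1/4-d)) in *.
  set (a3 := RInt g (1/4-d) (1/4+d)) in *.
  set (a4 := RInt g (1/4+d) (3/4-d)) in *.
  set (a5 := RInt g (3/4-d) (3/4)) in *.
  pose proof (Rabs_triang a1 (a2 + (a3 + (a4 + a5)))).
  pose proof (Rabs_triang a2 (a3 + (a4 + a5))).
  pose proof (Rabs_triang a3 (a4 + a5)).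
  pose proof (Rabs_triang a4 a5).
  lra.
Qed.


Lemma vdc_sin (mu a b m0 : R) : a <= b -> b - a <= 1 -> 0 < m0 -> 0 < Rabs mu ->
  (forall t, a <= t <= b -> m0 <= Rabs (cos (2*PI*t))) ->
  Rabs (RInt (fun t => cos (mu * sin (2*PI*t))) a b) <= (/m0 + /(m0*m0)) / Rabs mu /\
  Rabs (RInt (fun t => sin (mu * sin (2*PI*t))) a b) <= (/m0 + /(m0*m0)) / Rabs mu.
Proof.
  intros Hab Hl Hm0 Hmu Hc. pose proof PI_RGT_0 as Hpi. pose proof PI_4 as Hpi4.
  assert (Hpi1 : 2 <= PI) by (pose proof PI2_1; lra).
  set (A := Rabs mu) in *.
  assert (Hm : 0 < 2*PI*A*m0) by (apply Rmult_lt_0_compat; auto; apply Rmult_lt_0_compat; lra).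
  assert (Hbound : 2/(2*PI*A*m0) + (b-a)*((4*PI*PI*A)/((2*PI*A*m0)*(2*PI*A*m0))) <= (/m0 + /(m0*m0)) / A).
  { replace (2/(2*PI*A*m0)) with (/PI * (/m0 / A)) by (field; lra).
    replace ((4*PI*PI*A)/((2*PI*A*m0)*(2*PI*A*m0))) with (/(m0*m0)/A) by (field; lra).
    assert (0 < /m0/A) by (apply Rmult_lt_0_compat; apply Rinv_0_lt_compat; auto).
    assert (0 < /(m0*m0)/A) by (apply Rmult_lt_0_compat; apply Rinv_0_lt_compat; nra).
    assert (/PI <= 1) by (rewrite <- Rinv_1; apply Rinv_le_contravar; lra).
    unfold Rdiv. rewrite Rmult_plus_distr_r. unfold Rdiv in *. nra. }
  destruct (vdc (fun t => mu * sin (2*PI*t)) (fun t => mu * (2*PI*cos (2*PI*t)))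
                (fun t => - (mu * (4*PI*PI*sin (2*PI*t)))) a b (2*PI*A*m0) (4*PI*PI*A)) as [H1 H2]; auto.
  - intros t _. auto_derive. auto. ring.
  - intros t _. auto_derive. auto. ring.
  - intros t _. apply cont_opp. apply cont_mult. apply cont_const. apply cont_mult. apply cont_const.
    apply cont_sin. apply cont_mult. apply cont_const. apply cont_id.
  - intros t Ht. unfold A. rewrite !Rabs_mult. rewrite (Rabs_right 2) by lra. rewrite (Rabs_right PI) by lra.
    specialize (Hc t Ht). pose proof (Rabs_pos mu). assert (0 <= 2*PI*Rabs mu) by nra. nra.
  - intros t _. unfold A. rewrite Rabs_Ropp, !Rabs_mult. rewrite (Rabs_right 4) by lra. rewrite (Rabs_right PI) by lra.
    assert (Rabs (sin (2*PI*t)) <= 1) by (apply Rabs_le; apply SIN_bound).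
    pose proof (Rabs_pos mu). pose proof (Rabs_pos (sin (2*PI*t))).
    assert (0 <= Rabs mu * (4*PI*PI)) by (apply Rmult_le_pos; nra).
    nra.
  - split; lra.
Qed.

Lemma step2 (e : R) : 0 < e -> exists L, 0 <= L /\ forall mu, L < Rabs mu ->
  Rabs (RInt (fun t => cos (mu * sin (2*PI*t))) 0 1) < e /\
  Rabs (RInt (fun t => sin (mu * sin (2*PI*t))) 0 1) < e.
Proof.
  intros He. pose proof PI_RGT_0 as Hpi. pose proof PI2_1.
  set (d := Rmin e 1 / 16).
  assert (Hd : 0 < d) by (unfold d; apply Rmult_lt_0_compat; [apply Rmin_pos; lra | lra]).
  assert (Hd1 : d < 1/8) by (unfold d; pose proof (Rmin_r e 1); lra).
  assert (Hd2 : 4*d <= e/4) by (unfold d; pose proof (Rmin_l e 1); lra).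
  set (m0 := cos (PI/2 - 2*PI*d)).
  assert (Hm0 : 0 < m0) by (unfold m0; apply cos_gt_0; nra).
  set (C := /m0 + /(m0*m0)).
  assert (HC : 0 < C) by (unfold C; assert (0 < /m0) by (apply Rinv_0_lt_compat; auto);
     assert (0 < /(m0*m0)) by (apply Rinv_0_lt_compat; nra); lra).
  exists (4 * C / e). split. { unfold Rdiv. apply Rmult_le_pos. lra. left; apply Rinv_0_lt_compat; auto. }
  intros mu Hmu.
  assert (HA : 0 < Rabs mu) by (assert (0 < 4*C/e) by (unfold Rdiv; apply Rmult_lt_0_compat; [lra| apply Rinv_0_lt_compat; auto]); lra).
  assert (HCm : C / Rabs mu < e/4).
  { apply (Rmult_lt_reg_r (Rabs mu)); auto. unfold Rdiv. rewrite Rmult_assoc, Rinv_l by lra.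
    apply (Rmult_lt_reg_r (/e)). apply Rinv_0_lt_compat; auto.
    replace (e * / 4 * Rabs mu * / e) with (Rabs mu / 4) by (field; lra). unfold Rdiv in Hmu. lra. }
  assert (Hc1 : forall t, -1/4 + d <= t <= 1/4 - d -> m0 <= Rabs (cos (2*PI*t))).
  { intros t Ht. assert (0 <= m0 <= cos (2*PI*t)).
    { split. lra. unfold m0. apply cos_lower. nra. nra. apply Rabs_le. nra. }
    rewrite Rabs_right; lra. }
  assert (Hc2 : forall t, 1/4 + d <= t <= 3/4 - d -> m0 <= Rabs (cos (2*PI*t))).
  { intros t Ht. assert (0 <= m0 <= cos (2*PI*t - PI)).
    { split. lra. unfold m0. apply cos_lower. nra. nra. apply Rabs_le. nra. }
    replace (2*PI*t) with ((2*PI*t - PI) + PI) by ring. rewrite neg_cos.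
    rewrite Rabs_Ropp, Rabs_right; lra. }
  destruct (vdc_sin mu (-1/4+d) (1/4-d) m0) as [A1 A2]; auto; try lra.
  destruct (vdc_sin mu (1/4+d) (3/4-d) m0) as [B1 B2]; auto; try lra.
  fold C in A1, A2, B1, B2.
  assert (Hcc : forall x, continuous (fun t => cos (mu * sin (2*PI*t))) x).
  { intros x. apply cont_cos. apply cont_mult. apply cont_const. apply cont_sin. apply cont_mult. apply cont_const. apply cont_id. }
  assert (Hcs : forall x, continuous (fun t => sin (mu * sin (2*PI*t))) x).
  { intros x. apply cont_sin. apply cont_mult. apply cont_const. apply cont_sin. apply cont_mult. apply cont_const. apply cont_id. }
  assert (Hper : forall t, sin (2*PI*(t+1)) = sin (2*PI*t)).
  { intros t. replace (2*PI*(t+1)) with (2*PI*t + 2*INR 1*PI) by (simpl; ring). apply sin_period. }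
  split.
  - pose proof (step2_gen (fun t => cos (mu * sin (2*PI*t))) d (C/Rabs mu) Hd Hd1 Hcc
      (fun t => ltac:(simpl; rewrite Hper; reflexivity))
      (fun t => ltac:(apply Rabs_le; apply COS_bound)) A1 B1). lra.
  - pose proof (step2_gen (fun t => sin (mu * sin (2*PI*t))) d (C/Rabs mu) Hd Hd1 Hcs
      (fun t => ltac:(simpl; rewrite Hper; reflexivity))
      (fun t => ltac:(apply Rabs_le; apply SIN_bound)) A2 B2). lra.
Qed.


Lemma exR_all (g : R -> R) a b : (forall z, continuous g z) -> ex_RInt g a b.
Proof. intros; apply exR; auto. Qed.

Lemma step1 (G G1 h : R -> R) (B L : R) (Q : nat) :
  (0 < Q)%nat -> (forall x, is_derive G x (G1 x)) -> (forall x, continuous G1 x) ->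
  (forall x, Rabs (G x) <= B) -> (forall x, Rabs (G1 x) <= L) ->
  (forall t, continuous h t) -> (forall t, h (t+1) = h t) -> (forall t, Rabs (h t) <= 1) ->
  Rabs (RInt (fun x => G x * h (INR Q * x)) 0 1 - RInt G 0 1 * RInt h 0 1) <= (4*B + 2*L) / INR Q.
Proof.
  intros HQ HdG HcG1 HB HL Hch Hph Hbh.
  assert (HQr : 0 < INR Q) by (apply lt_0_INR; auto).
  assert (HcG : forall x, continuous G x) by (intros; eapply cont_of_der; eauto).
  set (m := RInt h 0 1).
  assert (Hm : Rabs m <= 1).
  { unfold m. replace 1 with ((1-0)*1) at 2 by ring. apply abs_RInt_le_const. lra. apply exR_all; auto. auto. }
  set (h0 t := h t - m).
  assert (Hch0 : forall t, continuous h0 t) by (intros; apply cont_minus; auto; apply cont_const).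
  assert (Hph0 : forall t, h0 (t+1) = h0 t) by (intros; unfold h0; rewrite Hph; auto).
  assert (Hbh0 : forall t, Rabs (h0 t) <= 2).
  { intros t. unfold h0. pose proof (Rabs_triang (h t) (-m)). rewrite Rabs_Ropp in H. pose proof (Hbh t). unfold Rminus. lra. }
  assert (Hi0 : RInt h0 0 1 = 0).
  { unfold h0. pose proof (RInt_minus (V:=R_CompleteNormedModule) h (fun _ => m) 0 1 (exR_all h 0 1 Hch) (exR_all _ 0 1 (fun z => cont_const m z))) as E.
    unfold minus, plus, opp in E; simpl in E. unfold Rminus. rewrite E. rewrite RInt_const. unfold scal; simpl. unfold mult; simpl. fold m. ring. }
  set (K t := RInt h0 0 t).
  assert (HKp : forall t, K (t+1) = K t).
  { intros t. unfold K. rewrite (chasles h0 0 t (t+1)) by auto. rewrite shift1 by auto. rewrite Hi0. apply Rplus_0_r. }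
  assert (HKb : forall N t, 0 <= t <= INR N + 1 -> Rabs (K t) <= 2).
  { induction N as [|N IH]; intros t Ht.
    - simpl in Ht. unfold K. pose proof (abs_RInt_le_const h0 0 t 2 ltac:(lra) (exR_all h0 0 t Hch0) (fun u _ => Hbh0 u)). lra.
    - rewrite S_INR in Ht. destruct (Rle_dec t (INR N + 1)) as [Hle|Hgt].
      + apply IH; lra.
      + pose proof (pos_INR N). replace t with ((t-1)+1) by ring. rewrite HKp. apply IH. lra. }
  assert (HdK : forall t, is_derive K t (h0 t)).
  { intros t. apply (is_derive_RInt (V:=R_NormedModule) h0 K 0 t); auto.
    apply filter_forall. intros b. unfold K. apply (RInt_correct (V:=R_CompleteNormedModule)). apply exR_all; auto. }
  assert (HcK : forall t, continuous K t) by (intros; eapply cont_of_der; eauto).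
  set (q := INR Q). assert (Hq : 0 < q) by exact HQr.
  set (F x := G x * K (q * x) / q).
  set (dF x := G1 x * K (q * x) / q + G x * h0 (q * x)).
  assert (HdF : forall x, is_derive F x (dF x)).
  { intros x. unfold F, dF.
    assert (Dq : is_derive (fun x => q * x) x q) by (auto_derive; auto; ring).
    assert (DK : is_derive (fun x => K (q * x)) x (scal q (h0 (q * x)))) by (apply (is_derive_comp K (fun x => q * x)); auto).
    assert (DGK : is_derive (fun x => G x * K (q*x)) x (plus (mult (G1 x) (K (q*x))) (mult (G x) (scal q (h0 (q * x)))))).
    { apply (is_derive_mult G (fun x => K (q*x))); auto. intros; apply Rmult_comm. }
    assert (Dc : is_derive (fun _ : R => / q) x 0) by (auto_derive; auto).
    eapply is_derive_eq.
    - exact (is_derive_mult (fun x => G x * K (q*x)) (fun _ => /q) x _ _ DGK Dc Rmult_comm).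
    - simpl. unfold plus, mult, scal, zero; simpl. unfold mult; simpl. field. lra. }
  assert (HcKq : forall x, continuous (fun x => K (q * x)) x).
  { intros x. apply (continuous_comp (fun x => q * x) K). apply cont_mult. apply cont_const. apply cont_id. apply HcK. }
  assert (Hch0q : forall x, continuous (fun x => h0 (q * x)) x).
  { intros x. apply (continuous_comp (fun x => q * x) h0). apply cont_mult. apply cont_const. apply cont_id. apply Hch0. }
  assert (HcdF : forall x, continuous dF x).
  { intros x. unfold dF. apply cont_plus. unfold Rdiv. apply cont_mult. apply cont_mult; auto. apply cont_const.
    apply cont_mult; auto. }
  set (g2 x := G1 x * K (q * x) / q).
  assert (Hcg2 : forall x, continuous g2 x).
  { intros x. unfold g2, Rdiv. apply cont_mult. apply cont_mult; auto. apply cont_const. }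
  assert (H1 : is_RInt dF 0 1 (F 1 - F 0)).
  { apply (is_RInt_derive (V:=R_CompleteNormedModule) F dF); intros; auto. }
  assert (H2 : is_RInt g2 0 1 (RInt g2 0 1)) by (apply (RInt_correct (V:=R_CompleteNormedModule)); apply exR_all; auto).
  assert (H3 : is_RInt G 0 1 (RInt G 0 1)) by (apply (RInt_correct (V:=R_CompleteNormedModule)); apply exR_all; auto).
  pose proof (is_RInt_plus _ _ _ _ _ _ (is_RInt_minus _ _ _ _ _ _ H1 H2) (is_RInt_scal _ _ _ m _ H3)) as H4.
  assert (H5 : is_RInt (fun x => G x * h (q * x)) 0 1 ((F 1 - F 0) - RInt g2 0 1 + m * RInt G 0 1)).
  { eapply is_RInt_ext. 2: exact H4. intros x _. unfold plus, minus, opp, scal; simpl. unfold mult; simpl.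
    unfold dF, g2, h0. unfold plus; simpl. field. lra. }
  rewrite (is_RInt_unique _ _ _ _ H5). fold m.
  replace (F 1 - F 0 - RInt g2 0 1 + m * RInt G 0 1 - RInt G 0 1 * m) with ((F 1 - F 0) - RInt g2 0 1) by ring.
  assert (HK01 : forall x, 0 <= x <= 1 -> Rabs (K (q * x)) <= 2).
  { intros x Hx. apply (HKb Q). unfold q. split. nra. nra. }
  assert (HF : forall x, 0 <= x <= 1 -> Rabs (F x) <= 2 * B / q).
  { intros x Hx. unfold F, Rdiv. rewrite !Rabs_mult. rewrite (Rabs_right (/q)) by (left; apply Rinv_0_lt_compat; auto).
    apply Rmult_le_compat_r. left; apply Rinv_0_lt_compat; auto.
    pose proof (HB x). pose proof (HK01 x Hx). pose proof (Rabs_pos (G x)). pose proof (Rabs_pos (K (q*x))). nra. }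
  assert (Hg2 : Rabs (RInt g2 0 1) <= (1 - 0) * (2 * L / q)).
  { apply abs_RInt_le_const. lra. apply exR_all; auto. intros x Hx.
    unfold g2, Rdiv. rewrite !Rabs_mult. rewrite (Rabs_right (/q)) by (left; apply Rinv_0_lt_compat; auto).
    apply Rmult_le_compat_r. left; apply Rinv_0_lt_compat; auto.
    pose proof (HL x). pose proof (HK01 x Hx). pose proof (Rabs_pos (G1 x)). pose proof (Rabs_pos (K (q*x))). nra. }
  pose proof (HF 0 ltac:(lra)). pose proof (HF 1 ltac:(lra)).
  pose proof (Rabs_triang (F 1 - F 0) (- RInt g2 0 1)). pose proof (Rabs_triang (F 1) (- F 0)).
  rewrite Rabs_Ropp in H6, H7. unfold Rminus in *.
  replace ((4 * B + 2 * L) / q) with (2*B/q + 2*B/q + 2*L/q) by (field; lra). lra.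
Qed.


Lemma sum1n_ext u v m : (forall j, (1 <= j <= m)%nat -> u j = v j) -> sum1n u m = sum1n v m.
Proof.
  induction m; intros H; simpl; auto.
  rewrite IHm by (intros; apply H; lia). rewrite H by lia. auto.
Qed.

Lemma sum1n_derive (u du : nat -> R -> R) m x : (forall j, is_derive (u j) x (du j x)) ->
  is_derive (fun x => sum1n (fun j => u j x) m) x (sum1n (fun j => du j x) m).
Proof.
  intros H. induction m; simpl.
  - apply (is_derive_const (K:=R_AbsRing) (V:=R_NormedModule)).
  - apply (is_derive_plus (fun x => sum1n (fun j => u j x) m) (u (S m))); auto.
Qed.

Lemma sum1n_cont (u : nat -> R -> R) m x : (forall j, continuous (u j) x) ->
  continuous (fun x => sum1n (fun j => u j x) m) x.
Proof.
  intros H. induction m; simpl.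
  - apply cont_const.
  - apply cont_plus; auto.
Qed.

Lemma sum1n_abs u m : Rabs (sum1n u m) <= sum1n (fun j => Rabs (u j)) m.
Proof.
  induction m; simpl. rewrite Rabs_R0; lra.
  pose proof (Rabs_triang (sum1n u m) (u (S m))). lra.
Qed.

Lemma sum1n_le u v m : (forall j, u j <= v j) -> sum1n u m <= sum1n v m.
Proof. intros H; induction m; simpl. lra. pose proof (H (S m)); lra. Qed.

Lemma IZR_abs_ge1 (l : Z) : l <> 0%Z -> 1 <= Rabs (IZR l).
Proof.
  intros Hl. rewrite <- abs_IZR. apply IZR_le. lia.
Qed.

Lemma core (k l : Z) (eps : R) : l <> 0%Z -> 0 < eps ->
 exists ct, 0 <= ct /\ forall n c q, (1 <= n)%nat -> ct < c n ->
 exists qt : nat, forall q' y0, (forall j, (1 <= j < n)%nat -> q' j = q j) -> (qt < q' n)%nat ->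
 Rabs (RInt (fun x => cos (2*PI*(IZR k * x + IZR l * Gamma n c q' y0 x))) 0 1) < eps /\
 Rabs (RInt (fun x => sin (2*PI*(IZR k * x + IZR l * Gamma n c q' y0 x))) 0 1) < eps.
Proof.
  intros Hl He. pose proof PI_RGT_0 as Hpi. pose proof PI2_1 as Hpi2.
  destruct (step2 (eps/4)) as [Lam [HLam0 HLam]]; [lra|].
  exists Lam. split; auto.
  intros n c q Hn Hc. destruct n as [|m]; [lia|].
  set (Sabs := sum1n (fun j => Rabs (c j * (2*PI*INR (q j)))) m).
  assert (HSabs : 0 <= Sabs).
  { unfold Sabs. pose proof (sum1n_abs (fun j => c j * (2*PI*INR (q j))) m). pose proof (Rabs_pos (sum1n (fun j => c j * (2*PI*INR (q j))) m)). lra. }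
  set (L := 2*PI*(Rabs (IZR k) + Rabs (IZR l) * Sabs)).
  assert (HL : 0 <= L).
  { unfold L. pose proof (Rabs_pos (IZR k)). pose proof (Rabs_pos (IZR l)). assert (0 <= Rabs (IZR l) * Sabs) by nra. nra. }
  destruct (INR_unbounded (4*(4+2*L)/eps)) as [qt Hqt]. exists qt.
  intros q' y0 Hq' HQ. set (Q := q' (S m)) in *.
  assert (HQr : INR qt < INR Q) by (apply lt_INR; auto).
  assert (HQ0 : (0 < Q)%nat) by lia.
  assert (HQpos : 0 < INR Q) by (apply lt_0_INR; auto).
  assert (Hqt0 : 0 <= 4*(4+2*L)/eps) by (unfold Rdiv; apply Rmult_le_pos; [lra| left; apply Rinv_0_lt_compat; auto]).
  assert (Herr : (4*1 + 2*L) / INR Q < eps/4).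
  { apply (Rmult_lt_reg_r (INR Q)); auto. unfold Rdiv. rewrite Rmult_assoc, Rinv_l by lra.
    apply (Rmult_lt_reg_r (4 * /eps)). apply Rmult_lt_0_compat; [lra | apply Rinv_0_lt_compat; auto].
    replace (eps * / 4 * INR Q * (4 * / eps)) with (INR Q) by (field; lra).
    unfold Rdiv in Hqt. lra. }
  set (mu := - (2*PI*IZR l * c (S m))).
  assert (Hmu : Lam < Rabs mu).
  { unfold mu. rewrite Rabs_Ropp, !Rabs_mult. rewrite (Rabs_right 2) by lra. rewrite (Rabs_right PI) by lra.
    pose proof (IZR_abs_ge1 l Hl). rewrite (Rabs_right (c (S m))) by lra. assert (1 <= 2*PI*Rabs (IZR l)) by nra. nra. }
  destruct (HLam mu Hmu) as [Hhc Hhs].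
  set (Sx x := sum1n (fun j => c j * sin (2*PI*INR (q j)*x)) m).
  set (th x := 2*PI*(IZR k * x + IZR l * (y0 - Sx x))).
  set (S1 x := sum1n (fun j => c j * (2*PI*INR (q j) * cos (2*PI*INR (q j)*x))) m).
  set (th1 x := 2*PI*(IZR k - IZR l * S1 x)).
  assert (HdS : forall x, is_derive Sx x (S1 x)).
  { intros x. unfold Sx, S1.
    apply (sum1n_derive (fun j x => c j * sin (2*PI*INR (q j)*x)) (fun j x => c j * (2*PI*INR (q j) * cos (2*PI*INR (q j)*x)))).
    intros j. auto_derive. auto. ring. }
  assert (Hdth : forall x, is_derive th x (th1 x)).
  { intros x. unfold th. auto_derive. exists (S1 x). apply HdS.
    replace (Derive (fun x0 : R => Sx x0) x) with (S1 x) by (symmetry; apply is_derive_unique; apply HdS). unfold th1. ring. }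
  assert (Hcth : forall x, continuous th x) by (intros; eapply cont_of_der; eauto).
  assert (Hcth1 : forall x, continuous th1 x).
  { intros x. unfold th1. apply cont_mult. apply cont_const. apply cont_minus. apply cont_const.
    apply cont_mult. apply cont_const. unfold S1.
    apply (sum1n_cont (fun j x => c j * (2*PI*INR (q j) * cos (2*PI*INR (q j)*x)))).
    intros j. apply cont_mult. apply cont_const. apply cont_mult. apply cont_const.
    apply cont_cos. apply cont_mult. apply cont_const. apply cont_id. }
  assert (Hbth1 : forall x, Rabs (th1 x) <= L).
  { intros x. unfold th1, L. rewrite Rabs_mult. rewrite (Rabs_right (2*PI)) by lra.
    apply Rmult_le_compat_l. lra.
    pose proof (Rabs_triang (IZR k) (- (IZR l * S1 x))). rewrite Rabs_Ropp, Rabs_mult in H.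
    assert (Rabs (S1 x) <= Sabs).
    { unfold S1, Sabs. eapply Rle_trans. apply sum1n_abs. apply sum1n_le. intros j.
      rewrite !Rabs_mult. assert (Rabs (cos (2 * PI * INR (q j) * x)) <= 1) by (apply Rabs_le; apply COS_bound).
      pose proof (Rabs_pos (c j)). pose proof (Rabs_pos (2*PI)). pose proof (Rabs_pos (INR (q j))).
      pose proof (Rabs_pos (cos (2 * PI * INR (q j) * x))).
      assert (0 <= Rabs (c j) * (Rabs 2 * Rabs PI * Rabs (INR (q j)))).
      { apply Rmult_le_pos; auto. apply Rmult_le_pos; auto. apply Rmult_le_pos; apply Rabs_pos. }
      rewrite <- !Rmult_assoc. nra. }
    pose proof (Rabs_pos (IZR l)). unfold Rminus. nra. }
  set (hc t := cos (mu * sin (2*PI*t))).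
  set (hs t := sin (mu * sin (2*PI*t))).
  assert (Hper : forall t, sin (2*PI*(t+1)) = sin (2*PI*t)).
  { intros t. replace (2*PI*(t+1)) with (2*PI*t + 2*INR 1*PI) by (simpl; ring). apply sin_period. }
  assert (Hchc : forall t, continuous hc t).
  { intros x. apply cont_cos. apply cont_mult. apply cont_const. apply cont_sin. apply cont_mult. apply cont_const. apply cont_id. }
  assert (Hchs : forall t, continuous hs t).
  { intros x. apply cont_sin. apply cont_mult. apply cont_const. apply cont_sin. apply cont_mult. apply cont_const. apply cont_id. }
  assert (Hphc : forall t, hc (t+1) = hc t) by (intros; unfold hc; rewrite Hper; auto).
  assert (Hphs : forall t, hs (t+1) = hs t) by (intros; unfold hs; rewrite Hper; auto).
  assert (Hbhc : forall t, Rabs (hc t) <= 1) by (intros; apply Rabs_le; apply COS_bound).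
  assert (Hbhs : forall t, Rabs (hs t) <= 1) by (intros; apply Rabs_le; apply SIN_bound).
  assert (HdC : forall x, is_derive (fun x => cos (th x)) x (- sin (th x) * th1 x)).
  { intros x. eapply is_derive_eq. apply (is_derive_comp cos th). apply is_derive_cos. apply Hdth.
    unfold scal; simpl; unfold mult; simpl. ring. }
  assert (HdS' : forall x, is_derive (fun x => sin (th x)) x (cos (th x) * th1 x)).
  { intros x. eapply is_derive_eq. apply (is_derive_comp sin th). apply is_derive_sin. apply Hdth.
    unfold scal; simpl; unfold mult; simpl. ring. }
  assert (HcC1 : forall x, continuous (fun x => - sin (th x) * th1 x) x).
  { intros x. apply cont_mult; auto. apply cont_opp. apply cont_sin; auto. }
  assert (HcS1 : forall x, continuous (fun x => cos (th x) * th1 x) x).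
  { intros x. apply cont_mult; auto. apply cont_cos; auto. }
  assert (HbC : forall x, Rabs (cos (th x)) <= 1) by (intros; apply Rabs_le; apply COS_bound).
  assert (HbS : forall x, Rabs (sin (th x)) <= 1) by (intros; apply Rabs_le; apply SIN_bound).
  assert (HbC1 : forall x, Rabs (- sin (th x) * th1 x) <= L).
  { intros x. rewrite Rabs_mult, Rabs_Ropp. pose proof (HbS x). pose proof (Hbth1 x). pose proof (Rabs_pos (sin (th x))). pose proof (Rabs_pos (th1 x)). nra. }
  assert (HbS1 : forall x, Rabs (cos (th x) * th1 x) <= L).
  { intros x. rewrite Rabs_mult. pose proof (HbC x). pose proof (Hbth1 x). pose proof (Rabs_pos (cos (th x))). pose proof (Rabs_pos (th1 x)). nra. }
  assert (Key : forall (G G1 h : R -> R), (forall x, is_derive G x (G1 x)) -> (forall x, continuous G1 x) ->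
     (forall x, Rabs (G x) <= 1) -> (forall x, Rabs (G1 x) <= L) ->
     (forall t, continuous h t) -> (forall t, h (t+1) = h t) -> (forall t, Rabs (h t) <= 1) ->
     Rabs (RInt h 0 1) < eps/4 ->
     Rabs (RInt (fun x => G x * h (INR Q * x)) 0 1) < eps/2).
  { intros G G1 h H1 H2 H3 H4 H5 H6 H7 H8.
    pose proof (step1 G G1 h 1 L Q HQ0 H1 H2 H3 H4 H5 H6 H7) as St.
    assert (HG : Rabs (RInt G 0 1) <= 1).
    { replace 1 with ((1-0)*1) at 2 by ring. apply abs_RInt_le_const. lra.
      apply exR_all. intros; eapply cont_of_der; eauto. auto. }
    set (I := RInt (fun x => G x * h (INR Q * x)) 0 1) in *.
    set (P := RInt G 0 1 * RInt h 0 1) in *.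
    assert (Rabs P <= eps/4).
    { unfold P. rewrite Rabs_mult. pose proof (Rabs_pos (RInt G 0 1)). pose proof (Rabs_pos (RInt h 0 1)). nra. }
    pose proof (Rabs_triang (I - P) P). replace (I - P + P) with I in H0 by (unfold Rminus; rewrite Rplus_assoc, Rplus_opp_l, Rplus_0_r; reflexivity). lra. }
  assert (KC1 := Key _ _ hc HdC HcC1 HbC HbC1 Hchc Hphc Hbhc Hhc).
  assert (KC2 := Key _ _ hs HdC HcC1 HbC HbC1 Hchs Hphs Hbhs Hhs).
  assert (KS1 := Key _ _ hc HdS' HcS1 HbS HbS1 Hchc Hphc Hbhc Hhc).
  assert (KS2 := Key _ _ hs HdS' HcS1 HbS HbS1 Hchs Hphs Hbhs Hhs).
  cbv beta in KC1, KC2, KS1, KS2.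
  assert (Hphi : forall x, 2*PI*(IZR k * x + IZR l * Gamma (S m) c q' y0 x) = th x + mu * sin (2*PI*(INR Q * x))).
  { intros x. unfold Gamma. cbn [sum1n].
    rewrite (sum1n_ext (fun j => c j * sin (2 * PI * INR (q' j) * x)) (fun j => c j * sin (2 * PI * INR (q j) * x)))
      by (intros j Hj; rewrite Hq' by lia; auto).
    replace (2*PI*(INR Q * x)) with (2*PI*INR Q*x) by ring. unfold th, Sx, mu, Q. ring. }
  assert (Hex : forall (f : R -> R) (g : R -> R), (forall x, continuous f x) -> (forall x, continuous g x) ->
     ex_RInt (fun x => f x * g (INR Q * x)) 0 1).
  { intros f g Hf Hg. apply exR_all. intros x. apply cont_mult; auto.
    apply (continuous_comp (fun x => INR Q * x) g). apply cont_mult. apply cont_const. apply cont_id. auto. }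
  assert (HcthC : forall x, continuous (fun x => cos (th x)) x) by (intros; apply cont_cos; auto).
  assert (HcthS : forall x, continuous (fun x => sin (th x)) x) by (intros; apply cont_sin; auto).
  split.
  - rewrite (RInt_ext _ (fun x => cos (th x) * hc (INR Q * x) - sin (th x) * hs (INR Q * x)))
      by (intros x _; rewrite Hphi, cos_plus; auto).
    pose proof (RInt_minus (V:=R_CompleteNormedModule) _ _ 0 1 (Hex _ _ HcthC Hchc) (Hex _ _ HcthS Hchs)) as E.
    unfold minus, plus, opp in E; simpl in E. unfold Rminus. rewrite E.
    pose proof (Rabs_triang (RInt (fun x => cos (th x) * hc (INR Q * x)) 0 1) (- RInt (fun x => sin (th x) * hs (INR Q * x)) 0 1)).
    rewrite Rabs_Ropp in H. lra.
  - rewrite (RInt_ext _ (fun x => sin (th x) * hc (INR Q * x) + cos (th x) * hs (INR Q * x)))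
      by (intros x _; rewrite Hphi, sin_plus; auto).
    pose proof (RInt_plus (V:=R_CompleteNormedModule) _ _ 0 1 (Hex _ _ HcthS Hchc) (Hex _ _ HcthC Hchs)) as E.
    unfold plus in E; simpl in E. rewrite E.
    pose proof (Rabs_triang (RInt (fun x => sin (th x) * hc (INR Q * x)) 0 1) (RInt (fun x => cos (th x) * hs (INR Q * x)) 0 1)).
    lra.
Qed.


Lemma Cmod_le2 (x : C) M : Rabs (fst x) <= M -> Rabs (snd x) <= M -> Cmod x <= 2*M.
Proof.
  intros H1 H2. destruct x as [u v]. simpl in *. unfold Cmod. simpl.
  assert (HM : 0 <= M) by (pose proof (Rabs_pos u); lra).
  rewrite <- (sqrt_pow2 (2*M)) by lra. apply sqrt_le_1_alt.
  pose proof (Rsqr_abs u). pose proof (Rsqr_abs v). unfold Rsqr in *. pose proof (Rabs_pos u). pose proof (Rabs_pos v). simpl. nra.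
Qed.

Lemma exC (f : R -> C) a b : ex_RInt (fun t => fst (f t)) a b -> ex_RInt (fun t => snd (f t)) a b ->
  ex_RInt (V:=C_R_NormedModule) f a b.
Proof.
  intros [l1 H1] [l2 H2]. exists (l1, l2).
  apply (is_RInt_fct_extend_pair (U:=R_NormedModule) (V:=R_NormedModule) f a b l1 l2 H1 H2).
Qed.

Lemma RInt_C (f : R -> C) a b : ex_RInt (fun t => fst (f t)) a b -> ex_RInt (fun t => snd (f t)) a b ->
  RInt (V:=C_R_CompleteNormedModule) f a b = (RInt (fun t => fst (f t)) a b, RInt (fun t => snd (f t)) a b).
Proof.
  intros H1 H2. apply is_RInt_unique.
  apply (is_RInt_fct_extend_pair (U:=R_NormedModule) (V:=R_NormedModule) f a b); apply (RInt_correct (V:=R_CompleteNormedModule)); auto.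
Qed.

Lemma sin_Zper x (l : Z) : sin (x + 2*IZR l*PI) = sin x.
Proof.
  destruct l as [|p|p].
  - simpl. f_equal; ring.
  - replace (IZR (Z.pos p)) with (INR (Pos.to_nat p)) by (rewrite INR_IZR_INZ, positive_nat_Z; auto). apply sin_period.
  - replace (IZR (Z.neg p)) with (- INR (Pos.to_nat p)) by (rewrite INR_IZR_INZ, positive_nat_Z, <- opp_IZR; auto).
    set (y := x + 2 * - INR (Pos.to_nat p) * PI). replace x with (y + 2 * INR (Pos.to_nat p) * PI) by (unfold y; ring).
    symmetry. apply sin_period.
Qed.

Lemma cos_Zper x (l : Z) : cos (x + 2*IZR l*PI) = cos x.
Proof.
  destruct l as [|p|p].
  - simpl. f_equal; ring.
  - replace (IZR (Z.pos p)) with (INR (Pos.to_nat p)) by (rewrite INR_IZR_INZ, positive_nat_Z; auto). apply cos_period.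
  - replace (IZR (Z.neg p)) with (- INR (Pos.to_nat p)) by (rewrite INR_IZR_INZ, positive_nat_Z, <- opp_IZR; auto).
    set (y := x + 2 * - INR (Pos.to_nat p) * PI). replace x with (y + 2 * INR (Pos.to_nat p) * PI) by (unfold y; ring).
    symmetry. apply cos_period.
Qed.

Lemma isR_eq (f : R -> R) a b l l' : is_RInt f a b l -> l = l' -> is_RInt f a b l'.
Proof. intros H ->; exact H. Qed.

Lemma int_cos_lin al (l : Z) : l <> 0%Z ->
  is_RInt (fun y => cos (al + 2*PI*IZR l*y)) 0 1 0 /\ is_RInt (fun y => sin (al + 2*PI*IZR l*y)) 0 1 0.
Proof.
  intros Hl. pose proof PI_RGT_0.
  assert (Hl' : IZR l <> 0) by (apply not_0_IZR; auto).
  split.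
  - eapply isR_eq.
    + apply (is_RInt_derive (V:=R_CompleteNormedModule) (fun y => sin (al + 2*PI*IZR l*y) / (2*PI*IZR l))).
      * intros x _. auto_derive. auto. field. split; lra.
      * intros x _. apply cont_cos. apply cont_plus. apply cont_const. apply cont_mult. apply cont_const. apply cont_id.
    + unfold minus, plus, opp; simpl. rewrite Rmult_1_r, Rmult_0_r, Rplus_0_r.
      replace (al + 2*PI*IZR l) with (al + 2*IZR l*PI) by ring. rewrite sin_Zper. field. split; lra.
  - eapply isR_eq.
    + apply (is_RInt_derive (V:=R_CompleteNormedModule) (fun y => - cos (al + 2*PI*IZR l*y) / (2*PI*IZR l))).
      * intros x _. auto_derive. auto. field. split; lra.
      * intros x _. apply cont_sin. apply cont_plus. apply cont_const. apply cont_mult. apply cont_const. apply cont_id.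
    + unfold minus, plus, opp; simpl. rewrite Rmult_1_r, Rmult_0_r, Rplus_0_r.
      replace (al + 2*PI*IZR l) with (al + 2*IZR l*PI) by ring. rewrite cos_Zper. field. split; lra.
Qed.

Definition term (t : Z*Z*C) (x y : R) : C :=
  let '(k,l,a) := t in Cmult a (cexpi (2*PI*(IZR k*x + IZR l*y))).

Lemma tp_eval_cons t P x y : tp_eval (t::P) x y = Cplus (term t x y) (tp_eval P x y).
Proof. destruct t as [[k l] a]; reflexivity. Qed.

Definition inner0 (t : Z*Z*C) (x : R) : C :=
  let '(k,l,a) := t in if Z.eq_dec l 0 then term (k,l,a) x 0 else RtoC 0.

Definition tp0 (P : trig_poly2) (x : R) : C :=
  fold_right (fun t acc => Cplus (inner0 t x) acc) (RtoC 0) P.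

Lemma isC_eq (f : R -> C) a b l l' : is_RInt (V:=C_R_NormedModule) f a b l -> l = l' -> is_RInt (V:=C_R_NormedModule) f a b l'.
Proof. intros H ->; exact H. Qed.

Lemma is_RInt_C0 (v : C) : is_RInt (V:=C_R_NormedModule) (fun _ => v) 0 1 v.
Proof.
  eapply isC_eq. apply is_RInt_const. replace (1-0) with 1 by ring. apply (scal_one (V:=C_R_NormedModule)).
Qed.

Lemma inner_is t x : is_RInt (V:=C_R_NormedModule) (fun y => term t x y) 0 1 (inner0 t x).
Proof.
  destruct t as [[k l] a]. unfold inner0. destruct (Z.eq_dec l 0) as [->|Hl].
  - eapply is_RInt_ext. 2: apply is_RInt_C0. intros y _. simpl. rewrite !Rmult_0_l. reflexivity.
  - destruct (int_cos_lin (2*PI*IZR k*x) l Hl) as [Hc Hs].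
    apply (is_RInt_fct_extend_pair (U:=R_NormedModule) (V:=R_NormedModule)).
    + eapply isR_eq. eapply is_RInt_ext. 2: apply (is_RInt_minus _ _ _ _ _ _ (is_RInt_scal _ _ _ (fst a) _ Hc) (is_RInt_scal _ _ _ (snd a) _ Hs)).
      * intros y _. unfold minus, plus, opp, scal; simpl. unfold mult; simpl.
        replace (2 * PI * (IZR k * x + IZR l * y)) with (2 * PI * IZR k * x + 2 * PI * IZR l * y) by ring. ring.
      * unfold minus, plus, opp, scal; simpl. unfold mult; simpl. ring.
    + eapply isR_eq. eapply is_RInt_ext. 2: apply (is_RInt_plus _ _ _ _ _ _ (is_RInt_scal _ _ _ (fst a) _ Hs) (is_RInt_scal _ _ _ (snd a) _ Hc)).
      * intros y _. unfold minus, plus, opp, scal; simpl. unfold mult; simpl.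
        replace (2 * PI * (IZR k * x + IZR l * y)) with (2 * PI * IZR k * x + 2 * PI * IZR l * y) by ring. ring.
      * unfold minus, plus, opp, scal; simpl. unfold mult; simpl. ring.
Qed.

Lemma tp_is P x : is_RInt (V:=C_R_NormedModule) (fun y => tp_eval P x y) 0 1 (tp0 P x).
Proof.
  induction P as [|t P IH].
  - apply is_RInt_C0.
  - eapply is_RInt_ext. 2: apply (is_RInt_plus _ _ _ _ _ _ (inner_is t x) IH).
    intros y _. rewrite tp_eval_cons. reflexivity.
Qed.

Lemma T2_eq P : int_T2 P = @RInt C_R_CompleteNormedModule (tp0 P) 0 1.
Proof.
  unfold int_T2. apply (RInt_ext (V:=C_R_CompleteNormedModule)). intros x _. apply (is_RInt_unique (V:=C_R_CompleteNormedModule)). apply tp_is.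
Qed.

Lemma Gamma_cont n c q y0 x : continuous (Gamma n c q y0) x.
Proof.
  unfold Gamma. apply cont_minus. apply cont_const.
  apply (sum1n_cont (fun j x => c j * sin (2 * PI * INR (q j) * x))). intros j.
  apply cont_mult. apply cont_const. apply cont_sin. apply cont_mult. apply cont_const. apply cont_id.
Qed.

Lemma ex_term t (g : R -> R) : (forall x, continuous g x) ->
  ex_RInt (V:=C_R_CompleteNormedModule) (fun x => term t x (g x)) 0 1.
Proof.
  intros Hg. destruct t as [[k l] a].
  assert (Hph : forall z, continuous (fun x => 2*PI*(IZR k*x + IZR l*g x)) z).
  { intros z. apply cont_mult. apply cont_const. apply cont_plus; apply cont_mult; auto; try apply cont_const; apply cont_id. }
  apply exC.
  - apply exR_all. intros z. simpl. apply cont_minus; apply cont_mult; try apply cont_const.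
    apply cont_cos; auto. apply cont_sin; auto.
  - apply exR_all. intros z. simpl. apply cont_plus; apply cont_mult; try apply cont_const.
    apply cont_sin; auto. apply cont_cos; auto.
Qed.

Lemma ex_inner t : ex_RInt (V:=C_R_CompleteNormedModule) (inner0 t) 0 1.
Proof.
  destruct t as [[k l] a]. unfold inner0. destruct (Z.eq_dec l 0).
  - apply (ex_term (k,l,a) (fun _ => 0)). intros; apply cont_const.
  - exists (RtoC 0). apply is_RInt_C0.
Qed.

Lemma ex_tp P (g : R -> R) : (forall x, continuous g x) ->
  ex_RInt (V:=C_R_CompleteNormedModule) (fun x => tp_eval P x (g x)) 0 1.
Proof.
  intros Hg. induction P as [|t P IH].
  - exists (RtoC 0). apply is_RInt_C0.
  - eapply ex_RInt_ext. 2: apply (ex_RInt_plus _ _ _ _ (ex_term t g Hg) IH).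
    intros x _. rewrite tp_eval_cons. reflexivity.
Qed.

Lemma ex_tp0 P : ex_RInt (V:=C_R_CompleteNormedModule) (tp0 P) 0 1.
Proof.
  induction P as [|t P IH].
  - exists (RtoC 0). apply is_RInt_C0.
  - eapply ex_RInt_ext. 2: apply (ex_RInt_plus _ _ _ _ (ex_inner t) IH).
    intros x _. reflexivity.
Qed.

Lemma Cminus_self (u : C) : Cminus u u = RtoC 0.
Proof. destruct u as [u1 u2]. unfold Cminus, Cplus, Copp, RtoC; simpl. f_equal; ring. Qed.

Lemma Cminus_plus (a b c d : C) : Cminus (Cplus a b) (Cplus c d) = Cplus (Cminus a c) (Cminus b d).
Proof. destruct a, b, c, d. unfold Cminus, Cplus, Copp; simpl. f_equal; ring. Qed.

Lemma lin_bound1 a1 a2 x y e : Rabs x < e -> Rabs y < e -> Rabs (a1 * x - a2 * y) <= (Rabs a1 + Rabs a2) * e.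
Proof.
  intros Hx Hy. pose proof (Rabs_triang (a1 * x) (- (a2 * y))). rewrite Rabs_Ropp, !Rabs_mult in H.
  pose proof (Rabs_pos a1). pose proof (Rabs_pos a2). unfold Rminus. nra.
Qed.
Lemma lin_bound2 a1 a2 x y e : Rabs x < e -> Rabs y < e -> Rabs (a1 * x + a2 * y) <= (Rabs a1 + Rabs a2) * e.
Proof.
  intros Hx Hy. pose proof (Rabs_triang (a1 * x) (a2 * y)). rewrite !Rabs_mult in H.
  pose proof (Rabs_pos a1). pose proof (Rabs_pos a2). nra.
Qed.

Lemma term_lemma t eps : 0 < eps -> exists ct, forall n c q, (1 <= n)%nat -> ct < c n ->
  exists qt : nat, forall q' y0, (forall j, (1 <= j < n)%nat -> q' j = q j) -> (qt < q' n)%nat ->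
  Cmod (Cminus (RInt (V:=C_R_CompleteNormedModule) (fun x => term t x (Gamma n c q' y0 x)) 0 1)
               (RInt (V:=C_R_CompleteNormedModule) (inner0 t) 0 1)) < eps.
Proof.
  intros He. destruct t as [[k l] a].
  destruct (Z.eq_dec l 0) as [->|Hl].
  - exists 0. intros n c q _ _. exists 0%nat. intros q' y0 _ _.
    rewrite (RInt_ext (V:=C_R_CompleteNormedModule) (fun x => term (k,0%Z,a) x (Gamma n c q' y0 x)) (inner0 (k,0%Z,a))).
    + rewrite Cminus_self, Cmod_0. auto.
    + intros x _. simpl. rewrite !Rmult_0_l. reflexivity.
  - set (A := Rabs (fst a) + Rabs (snd a)).
    assert (HA : 0 <= A) by (unfold A; pose proof (Rabs_pos (fst a)); pose proof (Rabs_pos (snd a)); lra).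
    set (e := eps / (4*A+1)).
    assert (He0 : 0 < e) by (unfold e; apply Rdiv_lt_0_compat; lra).
    assert (HAe : A * e <= eps/4).
    { assert (Hd : e * (4*A+1) = eps) by (unfold e; field; lra). nra. }
    destruct (core k l e Hl He0) as [ct [_ Hct]]. exists ct.
    intros n c q Hn Hc. destruct (Hct n c q Hn Hc) as [qt Hqt]. exists qt.
    intros q' y0 Hq' HQ. destruct (Hqt q' y0 Hq' HQ) as [Hcos Hsin].
    set (g := Gamma n c q' y0) in *.
    assert (Hg : forall x, continuous g x) by (intros; apply Gamma_cont).
    assert (Hph : forall z, continuous (fun x => 2*PI*(IZR k*x + IZR l*g x)) z).
    { intros z. apply cont_mult. apply cont_const. apply cont_plus; apply cont_mult; auto; try apply cont_const; apply cont_id. }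
    assert (Hexc : ex_RInt (fun x => cos (2*PI*(IZR k*x + IZR l*g x))) 0 1) by (apply exR_all; intros; apply cont_cos; auto).
    assert (Hexs : ex_RInt (fun x => sin (2*PI*(IZR k*x + IZR l*g x))) 0 1) by (apply exR_all; intros; apply cont_sin; auto).
    assert (E1 : RInt (fun x => fst (term (k,l,a) x (g x))) 0 1 = fst a * RInt (fun x => cos (2*PI*(IZR k*x + IZR l*g x))) 0 1 - snd a * RInt (fun x => sin (2*PI*(IZR k*x + IZR l*g x))) 0 1).
    { pose proof (RInt_minus (V:=R_CompleteNormedModule) _ _ 0 1 (ex_RInt_scal _ _ _ (fst a) Hexc) (ex_RInt_scal _ _ _ (snd a) Hexs)) as E.
      cbv beta in E. rewrite !(RInt_scal (V:=R_CompleteNormedModule)) in E by auto.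
      unfold minus, plus, opp, scal in E; simpl in E. unfold mult in E; simpl in E.
      unfold Rminus. rewrite <- E. apply RInt_ext. intros x _. simpl. reflexivity. }
    assert (E2 : RInt (fun x => snd (term (k,l,a) x (g x))) 0 1 = fst a * RInt (fun x => sin (2*PI*(IZR k*x + IZR l*g x))) 0 1 + snd a * RInt (fun x => cos (2*PI*(IZR k*x + IZR l*g x))) 0 1).
    { pose proof (RInt_plus (V:=R_CompleteNormedModule) _ _ 0 1 (ex_RInt_scal _ _ _ (fst a) Hexs) (ex_RInt_scal _ _ _ (snd a) Hexc)) as E.
      cbv beta in E. rewrite !(RInt_scal (V:=R_CompleteNormedModule)) in E by auto.
      unfold plus, scal in E; simpl in E. unfold mult in E; simpl in E.
      rewrite <- E. apply RInt_ext. intros x _. simpl. reflexivity. }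
    set (Ic := RInt (fun x => cos (2*PI*(IZR k*x + IZR l*g x))) 0 1) in *.
    set (Is := RInt (fun x => sin (2*PI*(IZR k*x + IZR l*g x))) 0 1) in *.
    assert (Hz : RInt (V:=C_R_CompleteNormedModule) (inner0 (k,l,a)) 0 1 = RtoC 0).
    { apply (is_RInt_unique (V:=C_R_CompleteNormedModule)). unfold inner0. destruct (Z.eq_dec l 0); [contradiction|]. apply is_RInt_C0. }
    rewrite Hz.
    rewrite RInt_C.
    2: { apply exR_all. intros z. simpl. apply cont_minus; apply cont_mult; try apply cont_const.
         apply cont_cos; auto. apply cont_sin; auto. }
    2: { apply exR_all. intros z. simpl. apply cont_plus; apply cont_mult; try apply cont_const.
         apply cont_sin; auto. apply cont_cos; auto. }
    rewrite E1, E2.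
    assert (B1 : Rabs (fst a * RInt (fun x => cos (2*PI*(IZR k*x + IZR l*g x))) 0 1 - snd a * RInt (fun x => sin (2*PI*(IZR k*x + IZR l*g x))) 0 1) <= eps/4).
    { eapply Rle_trans. apply lin_bound1; [exact Hcos | exact Hsin]. exact HAe. }
    assert (B2 : Rabs (fst a * RInt (fun x => sin (2*PI*(IZR k*x + IZR l*g x))) 0 1 + snd a * RInt (fun x => cos (2*PI*(IZR k*x + IZR l*g x))) 0 1) <= eps/4).
    { eapply Rle_trans. apply lin_bound2; [exact Hsin | exact Hcos]. exact HAe. }
    eapply Rle_lt_trans. apply Cmod_le2.
    + simpl. rewrite Ropp_0, Rplus_0_r. exact B1.
    + simpl. rewrite Ropp_0, Rplus_0_r. exact B2.
    + lra.
Qed.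

Lemma main_lemma P : forall eps, 0 < eps -> exists ct, forall n c q, (1 <= n)%nat -> ct < c n ->
  exists qt : nat, forall q' y0, (forall j, (1 <= j < n)%nat -> q' j = q j) -> (qt < q' n)%nat ->
  Cmod (Cminus (RInt (V:=C_R_CompleteNormedModule) (fun x => tp_eval P x (Gamma n c q' y0 x)) 0 1)
               (RInt (V:=C_R_CompleteNormedModule) (tp0 P) 0 1)) < eps.
Proof.
  induction P as [|t P IH]; intros eps He.
  - exists 0. intros n c q _ _. exists 0%nat. intros q' y0 _ _.
    rewrite (is_RInt_unique (V:=C_R_CompleteNormedModule) (tp0 nil) 0 1 (RtoC 0) (is_RInt_C0 (RtoC 0))).
    rewrite (is_RInt_unique (V:=C_R_CompleteNormedModule) (fun x => tp_eval nil x (Gamma n c q' y0 x)) 0 1 (RtoC 0) (is_RInt_C0 (RtoC 0))).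
    rewrite Cminus_self, Cmod_0. auto.
  - destruct (term_lemma t (eps/2)) as [ct1 H1]; [lra|].
    destruct (IH (eps/2)) as [ct2 H2]; [lra|].
    exists (Rmax ct1 ct2). intros n c q Hn Hc.
    destruct (H1 n c q Hn) as [qt1 Hq1]. { eapply Rle_lt_trans. apply Rmax_l. exact Hc. }
    destruct (H2 n c q Hn) as [qt2 Hq2]. { eapply Rle_lt_trans. apply Rmax_r. exact Hc. }
    exists (Nat.max qt1 qt2). intros q' y0 Hq' HQ.
    specialize (Hq1 q' y0 Hq' ltac:(lia)). specialize (Hq2 q' y0 Hq' ltac:(lia)).
    set (g := Gamma n c q' y0) in *.
    assert (Hg : forall x, continuous g x) by (intros; apply Gamma_cont).
    assert (E1 : RInt (V:=C_R_CompleteNormedModule) (fun x => tp_eval (t::P) x (g x)) 0 1 =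
       Cplus (RInt (V:=C_R_CompleteNormedModule) (fun x => term t x (g x)) 0 1) (RInt (V:=C_R_CompleteNormedModule) (fun x => tp_eval P x (g x)) 0 1)).
    { etransitivity. 2: exact (RInt_plus _ _ 0 1 (ex_term t g Hg) (ex_tp P g Hg)).
      apply (RInt_ext (V:=C_R_CompleteNormedModule)). intros x _. rewrite tp_eval_cons. reflexivity. }
    assert (E2 : RInt (V:=C_R_CompleteNormedModule) (tp0 (t::P)) 0 1 =
       Cplus (RInt (V:=C_R_CompleteNormedModule) (inner0 t) 0 1) (RInt (V:=C_R_CompleteNormedModule) (tp0 P) 0 1)).
    { etransitivity. 2: exact (RInt_plus _ _ 0 1 (ex_inner t) (ex_tp0 P)).
      apply (RInt_ext (V:=C_R_CompleteNormedModule)). intros x _. reflexivity. }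
    rewrite E1, E2, Cminus_plus.
    eapply Rle_lt_trans. apply Cmod_triangle. lra.
Qed.

Theorem lemma5p1 :
  forall (P : trig_poly2) (eps : R), 0 < eps ->
  exists ct : R,
  forall (n : nat) (c : nat -> R) (q : nat -> nat),
    (1 <= n)%nat ->
    (forall j, (1 <= j <= n)%nat -> 0 < c j) ->
    (forall j, (1 <= j < n)%nat -> (0 < q j)%nat) ->
    ct < c n ->
    exists qt : nat,
    forall (q' : nat -> nat) (y0 : R),
      (forall j, (1 <= j < n)%nat -> q' j = q j) ->
      (qt < q' n)%nat ->
      Cmod (Cminus (int_mu n c q' y0 P) (int_T2 P)) < eps.
Proof.
  intros P eps He. destruct (main_lemma P eps He) as [ct Hct].
  exists ct. intros n c q Hn _ _ Hc. destruct (Hct n c q Hn Hc) as [qt Hqt].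
  exists qt. intros q' y0 Hq' HQ. rewrite T2_eq. unfold int_mu. apply Hqt; auto.
Qed.
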